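(* Let $f_0,f_1\in \mathrm{PL}_0(\mathbf{I})$ satisfy $[f_1^{f_0},f_0f_1^{-1}]=1$ and $[f_0f_1^{-1},f_1^{f_0^2}]=1$. Let $A=(a,c)$ be an orbital of $f_0$ that is an up-bump, and suppose $(a,c)$ is not an orbital of $f_1$. Let $(b_1,d_1),(b_2,d_2),\dots,(b_n,d_n)$, with $n\ge1$, be all the orbitals of $f_1$ that meet $(a,c)$, in increasing order. Then: (i) $a<b_1$; (ii) there is a point $p<c$ such that $f_0|_{[p,c]}=f_1|_{[p,c]}$; (iii) $d_n=c$; (iv) if $p$ is the minimal point such that $f_0|_{[p,c]}=f_1|_{[p,c]}$, then $b_nf_0\ge p$; (v) $b_1f_0>b_n$.
   Context: $\mathrm{PL}_0(\mathbf{I})$ is the group of orientation-preserving piecewise-linear homeomorphisms of $[0,1]$ with finitely many points of non-differentiability. Functions act on the right: $tf=f(t)$, $fg=g\circ f$, $a^b=b^{-1}ab$, $[a,b]=aba^{-1}b^{-1}$. The orbitals of $f$ are the connected components (open intervals) of $\operatorname{Supp}(f)=\{x: xf\ne x\}$; an orbital $A$ is an up-bump if $xf>x$ for all $x\in A$. Orbitals are ordered by $A<B$ if every point of $A$ is less than every point of $B$. *)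

(* Defs.v *)
From Stdlib Require Import Reals Lra ClassicalEpsilon.
Open Scope R_scope.

(* Elements of PL_0(I) are represented as functions R -> R that are the
   identity outside [0,1]; equality of group elements is then equality
   of functions. Functions act on the right:  t(fg) = g(f(t)). *)

Definition affine_on (f : R -> R) (u v : R) : Prop :=
  exists m q : R, forall x, u <= x <= v -> f x = m * x + q.

Definition PL0 (f : R -> R) : Prop :=
  (forall x, x < 0 \/ 1 < x -> f x = x) /\
  f 0 = 0 /\ f 1 = 1 /\
  (forall x y, 0 <= x -> x < y -> y <= 1 -> f x < f y) /\
  exists (k : nat) (xs : nat -> R),
    xs 0%nat = 0 /\ xs k = 1 /\
    (forall i, (i < k)%nat -> xs i < xs (S i)) /\
    (forall i, (i < k)%nat -> affine_on f (xs i) (xs (S i))).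

Definition rmul (f g : R -> R) : R -> R := fun t => g (f t).

Definition inv (f : R -> R) : R -> R :=
  epsilon (inhabits (fun x : R => x))
    (fun g : R -> R => (forall x, g (f x) = x) /\ (forall x, f (g x) = x)).

Definition conjg (a b : R -> R) : R -> R := rmul (rmul (inv b) a) b.

Definition comm (a b : R -> R) : R -> R :=
  rmul (rmul (rmul a b) (inv a)) (inv b).

Definition idf : R -> R := fun x => x.

Definition supp (f : R -> R) (x : R) : Prop := f x <> x.

(* (a,c) is an orbital: a connected component of Supp f, i.e. an open
   interval contained in Supp f whose endpoints are not in Supp f *)
Definition orbital (f : R -> R) (a c : R) : Prop :=
  a < c /\ (forall x, a < x < c -> supp f x) /\ ~ supp f a /\ ~ supp f c.

Definition up_bump (f : R -> R) (a c : R) : Prop :=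
  orbital f a c /\ forall x, a < x < c -> x < f x.

Definition agree_on (f g : R -> R) (p c : R) : Prop :=
  forall x, p <= x <= c -> f x = g x.

(* Main.v *)
Require Import Defs.
From Stdlib Require Import Reals Lra Lia ClassicalEpsilon Classical FunctionalExtensionality.
Open Scope R_scope.


Definition cont (F : R -> R) (x : R) := forall e, 0 < e -> exists d, 0 < d /\
  forall y, Rabs (y - x) < d -> Rabs (F y - F x) < e.

Lemma cont_to_pt F x : cont F x -> continuity_pt F x.
Proof.
  unfold continuity_pt, continue_in, limit1_in, limit_in. intros H eps Heps. simpl.
  unfold R_dist. destruct (H eps Heps) as [d [Hd Hy]]. exists d; split; auto.
  intros y [_ Hy']. apply Hy; auto.
Qed.

Lemma inc_mono (t : nat -> R) : (forall j, t j <= t (S j)) ->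
  forall j j', (j <= j')%nat -> t j <= t j'.
Proof.
  intros H j j' Hj. induction Hj. lra. specialize (H m). lra.
Qed.

Lemma inc_lim (t : nat -> R) (z : R) (P Q : R -> R) :
  (forall j, t j <= t (S j)) -> (forall j, t j <= z) ->
  (forall x, cont P x) -> (forall x, cont Q x) ->
  (forall j, P (t j) = Q (t (S j))) ->
  exists L, t O <= L <= z /\ P L = Q L.
Proof.
  intros Hinc Hb HP HQ Hrel.
  destruct (completeness (fun y => exists j, y = t j)) as [L [HL1 HL2]].
  { exists z. intros y [j ->]. apply Hb. }
  { exists (t O). exists O. reflexivity. }
  assert (Hup : forall j, t j <= L) by (intros j; apply HL1; exists j; auto).
  assert (HLz : L <= z) by (apply HL2; intros y [j ->]; apply Hb).
  exists L. split. split; [apply Hup|exact HLz].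
  destruct (Req_dec (P L) (Q L)) as [E|E]; [exact E|exfalso].
  set (e := Rabs (P L - Q L) / 4).
  assert (He : 0 < e).
  { unfold e. assert (P L - Q L <> 0) by (intro; apply E; lra).
    apply Rabs_pos_lt in H. lra. }
  destruct (HP L e He) as [d1 [Hd1 H1]]. destruct (HQ L e He) as [d2 [Hd2 H2]].
  set (d := Rmin d1 d2).
  assert (Hd : 0 < d) by (unfold d; apply Rmin_glb_lt; auto).
  assert (Hex : exists j, L - d < t j).
  { destruct (classic (exists j, L - d < t j)) as [X|X]; auto.
    exfalso. assert (L <= L - d). apply HL2. intros y [j ->].
    destruct (Rle_or_lt (t j) (L - d)); auto. exfalso; apply X; exists j; auto. lra. }
  destruct Hex as [j Hj].
  assert (Hj1 : t j <= t (S j)) by apply Hinc.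
  assert (Ha : Rabs (P (t j) - P L) < e).
  { apply H1. assert (Hm: d <= d1) by apply Rmin_l. pose proof (Hup j).
    rewrite Rabs_left1; lra. }
  assert (Hb2 : Rabs (Q (t (S j)) - Q L) < e).
  { apply H2. assert (Hm: d <= d2) by apply Rmin_r. pose proof (Hup (S j)).
    rewrite Rabs_left1; lra. }
  rewrite Hrel in Ha.
  assert (Rabs (P L - Q L) <= Rabs (Q (t (S j)) - P L) + Rabs (Q (t (S j)) - Q L)).
  { replace (P L - Q L) with (- (Q (t (S j)) - P L) + (Q (t (S j)) - Q L)) by ring.
    eapply Rle_trans. apply Rabs_triang. rewrite Rabs_Ropp. lra. }
  unfold e in *. lra.
Qed.

Lemma cont_neg P x : cont P (- x) -> cont (fun y => P (- y)) x.
Proof.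
  intros H e He. destruct (H e He) as [d [Hd H1]]. exists d; split; auto.
  intros y Hy. apply H1. replace (- y - - x) with (- (y - x)) by ring.
  rewrite Rabs_Ropp; auto.
Qed.

Lemma dec_lim (t : nat -> R) (z : R) (P Q : R -> R) :
  (forall j, t (S j) <= t j) -> (forall j, z <= t j) ->
  (forall x, cont P x) -> (forall x, cont Q x) ->
  (forall j, P (t j) = Q (t (S j))) ->
  exists L, z <= L <= t O /\ P L = Q L.
Proof.
  intros Hd Hb HP HQ Hrel.
  destruct (inc_lim (fun j => - t j) (- z) (fun y => P (- y)) (fun y => Q (- y)))
    as [L [HL1 HL2]].
  - intros j. specialize (Hd j). lra.
  - intros j. specialize (Hb j). lra.
  - intros x. apply cont_neg. apply HP.
  - intros x. apply cont_neg. apply HQ.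
  - intros j. simpl. rewrite !Ropp_involutive. apply Hrel.
  - exists (- L). split. lra. exact HL2.
Qed.

Fixpoint cnt (B : nat -> R) (z : R) (m : nat) : nat :=
  match m with
  | O => O
  | S m' => (cnt B z m' + (if Rlt_dec (B m') z then 1 else 0))%nat
  end.

Lemma cnt_le_m B z m : (cnt B z m <= m)%nat.
Proof. induction m; simpl. lia. destruct (Rlt_dec (B m) z); lia. Qed.

Lemma cnt_mono B z1 z2 m : z1 <= z2 -> (cnt B z1 m <= cnt B z2 m)%nat.
Proof.
  intros H. induction m; simpl. lia.
  destruct (Rlt_dec (B m) z1); destruct (Rlt_dec (B m) z2); try lia.
  exfalso. lra.
Qed.

Lemma cnt_strict B z1 z2 m i : z1 <= B i < z2 -> (i < m)%nat ->
  (cnt B z1 m < cnt B z2 m)%nat.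
Proof.
  intros Hz Hi. induction m; simpl. lia.
  assert (z1 <= z2) by lra.
  destruct (Nat.eq_dec i m) as [->|Hne].
  - pose proof (cnt_mono B z1 z2 m H).
    destruct (Rlt_dec (B m) z1); destruct (Rlt_dec (B m) z2); try lra; lia.
  - assert (i < m)%nat by lia. specialize (IHm H0).
    destruct (Rlt_dec (B m) z1); destruct (Rlt_dec (B m) z2); try lia. lra.
Qed.

Definition tame (Y : R -> R) := exists (B : nat -> R) (K : nat),
  forall u v, u < v -> Y u = u -> Y v = v ->
  (forall i, (i <= K)%nat -> ~ (u < B i < v)) -> forall x, u <= x <= v -> Y x = x.

Lemma FIN (Y : R -> R) (t : nat -> R) : tame Y ->
  (forall j, t j < t (S j)) -> (forall j, Y (t j) = t j) ->
  (forall j, exists x, t j < x < t (S j) /\ Y x <> x) -> False.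
Proof.
  intros [B [K HT]] Hinc Hfix Hmov.
  assert (Hbp : forall j, exists i, (i <= K)%nat /\ t j < B i < t (S j)).
  { intros j. destruct (classic (exists i, (i <= K)%nat /\ t j < B i < t (S j))) as [X|X]; auto.
    exfalso. destruct (Hmov j) as [x [Hx Hy]]. apply Hy.
    apply (HT (t j) (t (S j))); auto; try lra.
    intros i Hi Hb. apply X. exists i; auto. }
  assert (Hc : forall j, (j <= cnt B (t j) (S K))%nat).
  { induction j. lia. destruct (Hbp j) as [i [Hi Hb]].
    assert (cnt B (t j) (S K) < cnt B (t (S j)) (S K))%nat.
    { apply cnt_strict with i; [lra|lia]. }
    lia. }
  specialize (Hc (S (S K))). pose proof (cnt_le_m B (t (S (S K))) (S K)). lia.
Qed.

Lemma iter_S_r (s : R -> R) n x : Nat.iter (S n) s x = Nat.iter n s (s x).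
Proof. apply Nat.iter_succ_r. Qed.

Lemma P_core (s Y : R -> R) (S : R -> Prop) (e x0 : R) :
  (forall x y, x < y -> s x < s y) ->
  (forall x, S x -> S (s x)) ->
  (forall x, S x -> Y (s x) = s (Y x)) ->
  tame Y -> S e -> Y e = e -> e < s e ->
  e < x0 < s e -> S x0 -> Y x0 <> x0 -> False.
Proof.
  intros Hm HS Hc HT Se Hf He Hx0 Sx0 Hy0.
  assert (Imono : forall n x y, x < y -> Nat.iter n s x < Nat.iter n s y).
  { induction n; simpl; intros; auto. }
  assert (IS : forall n x, S x -> S (Nat.iter n s x)).
  { induction n; simpl; intros; auto. }
  assert (Ic : forall n x, S x -> Y (Nat.iter n s x) = Nat.iter n s (Y x)).
  { induction n; simpl; intros; auto. rewrite Hc by auto. rewrite IHn; auto. }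
  apply (FIN Y (fun j => Nat.iter j s e) HT).
  - intros j. rewrite iter_S_r. apply Imono; auto.
  - intros j. rewrite Ic by auto. rewrite Hf. auto.
  - intros j. exists (Nat.iter j s x0). split. split.
    + apply Imono; lra.
    + rewrite iter_S_r. apply Imono; lra.
    + rewrite Ic by auto. intros E.
      destruct (Rtotal_order (Y x0) x0) as [L|[L|L]]; auto.
      * apply (Imono j) in L. lra.
      * apply (Imono j) in L. lra.
Qed.

Lemma inv_mono (X Xi : R -> R) : (forall x, Xi (X x) = x) -> (forall x, X (Xi x) = x) ->
  (forall x y, x < y -> X x < X y) -> forall x y, x < y -> Xi x < Xi y.
Proof.
  intros H1 H2 Hm x y Hxy. destruct (Rlt_or_le (Xi x) (Xi y)) as [L|L]; auto.
  exfalso. destruct (Rle_lt_or_eq_dec _ _ L) as [L'|L'].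
  - apply Hm in L'. rewrite !H2 in L'. lra.
  - rewrite <- (H2 x), <- (H2 y) in Hxy. rewrite L' in Hxy. lra.
Qed.

Lemma P_gen (X Xi Y : R -> R) (S : R -> Prop) (e : R) :
  (forall x, Xi (X x) = x) -> (forall x, X (Xi x) = x) ->
  (forall x y, x < y -> X x < X y) ->
  (forall x, S x -> S (X x)) -> (forall x, S x -> S (Xi x)) ->
  (forall x, S x -> Y (X x) = X (Y x)) ->
  tame Y -> S e -> Y e = e ->
  ((exists d, 0 < d /\ forall x, e < x < e + d -> S x /\ Y x <> x) \/
   (exists d, 0 < d /\ forall x, e - d < x < e -> S x /\ Y x <> x)) ->
  X e = e.
Proof.
  intros H1 H2 Hm HS1 HS2 Hc HT Se Hf Hmov.
  assert (Hmi := inv_mono X Xi H1 H2 Hm).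
  assert (Hci : forall x, S x -> Y (Xi x) = Xi (Y x)).
  { intros x Sx. rewrite <- (H1 (Y (Xi x))). rewrite <- Hc by auto. rewrite H2. auto. }
  assert (Main : forall s si, (forall x, si (s x) = x) -> (forall x, s (si x) = x) ->
     (forall x y, x < y -> s x < s y) -> (forall x, S x -> S (s x)) ->
     (forall x, S x -> S (si x)) -> (forall x, S x -> Y (s x) = s (Y x)) -> e < s e -> False).
  { intros s si K1 K2 Km KS1 KS2 Kc Hlt.
    assert (Kmi := inv_mono s si K1 K2 Km).
    destruct Hmov as [[d [Hd Hx]]|[d [Hd Hx]]].
    - set (x0 := (e + Rmin (e + d) (s e)) / 2).
      assert (e < Rmin (e+d) (s e)) by (apply Rmin_glb_lt; lra).
      assert (Rmin (e+d) (s e) <= e + d) by apply Rmin_l.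
      assert (Rmin (e+d) (s e) <= s e) by apply Rmin_r.
      destruct (Hx x0) as [Sx Yx]. unfold x0; lra.
      apply (P_core s Y S e x0 Km KS1 Kc HT Se Hf Hlt); auto. unfold x0; lra.
    - assert (Hsi : si e < e). { pose proof (Kmi e (s e) Hlt). rewrite K1 in H. auto. }
      set (x1 := (e + Rmax (e - d) (si e)) / 2).
      assert (Rmax (e-d) (si e) < e) by (apply Rmax_lub_lt; lra).
      assert (e - d <= Rmax (e-d) (si e)) by apply Rmax_l.
      assert (si e <= Rmax (e-d) (si e)) by apply Rmax_r.
      destruct (Hx x1) as [Sx Yx]. unfold x1; lra.
      apply (P_core s Y S e (s x1) Km KS1 Kc HT Se Hf Hlt); auto.
      + split. rewrite <- (K2 e). apply Km. unfold x1; lra. apply Km. unfold x1; lra.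
      + rewrite Kc by auto. intros E. apply Yx.
        rewrite <- (K1 (Y x1)), E, K1. auto. }
  destruct (Rtotal_order (X e) e) as [L|[L|L]]; auto; exfalso.
  - apply (Main Xi X H2 H1 Hmi HS2 HS1 Hci).
    rewrite <- (H1 e) at 1. apply Hmi. auto.
  - apply (Main X Xi H1 H2 Hm HS1 HS2 Hc). auto.
Qed.


Lemma pl_mono f : PL0 f -> forall x y, x < y -> f x < f y.
Proof.
  intros [Hout [H0 [H1 [Hm _]]]] x y Hxy.
  assert (Hge0 : forall z, 0 <= z <= 1 -> 0 <= f z).
  { intros z Hz. destruct (Req_dec z 0) as [->|Hz0]. lra.
    pose proof (Hm 0 z). lra. }
  assert (Hle1 : forall z, 0 <= z <= 1 -> f z <= 1).
  { intros z Hz. destruct (Req_dec z 1) as [->|Hz0]. lra.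
    pose proof (Hm z 1). lra. }
  destruct (Rlt_or_le x 0) as [Hx|Hx].
  - rewrite (Hout x) by auto.
    destruct (Rlt_or_le y 0). rewrite (Hout y) by auto. lra.
    destruct (Rle_or_lt y 1). pose proof (Hge0 y). lra.
    rewrite (Hout y) by auto. lra.
  - destruct (Rle_or_lt x 1).
    + destruct (Rle_or_lt y 1). apply Hm; lra.
      rewrite (Hout y) by auto. pose proof (Hle1 x). lra.
    + rewrite (Hout x), (Hout y) by lra. lra.
Qed.

Lemma pl_le f : PL0 f -> forall x y, x <= y -> f x <= f y.
Proof. intros Hf x y H. destruct (Rle_lt_or_eq_dec _ _ H). left; apply pl_mono; auto. subst; lra. Qed.

Lemma pl_out f : PL0 f -> forall x, x <= 0 \/ 1 <= x -> f x = x.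
Proof.
  intros [Hout [H0 [H1 _]]] x [Hx|Hx].
  destruct (Req_dec x 0). subst; auto. apply Hout; lra.
  destruct (Req_dec x 1). subst; auto. apply Hout; lra.
Qed.

Lemma locate (xs : nat -> R) (k : nat) :
  (forall i, (i < k)%nat -> xs i < xs (S i)) ->
  forall m, (m <= k)%nat -> forall u, xs O <= u < xs m ->
  exists i, (i < m)%nat /\ xs i <= u < xs (S i).
Proof.
  intros Hinc m. induction m; intros Hm u Hu. lra.
  destruct (Rlt_or_le u (xs m)).
  - destruct (IHm ltac:(lia) u) as [i [Hi Hi2]]. lra. exists i; split; auto; lia.
  - exists m; split; auto; lra.
Qed.

Lemma pl_aff f : PL0 f -> exists (xs : nat -> R) (k : nat),
  forall u v, u < v -> (forall i, (i <= k)%nat -> ~ (u < xs i < v)) -> affine_on f u v.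
Proof.
  intros Hf. pose proof (pl_out f Hf) as Hout.
  destruct Hf as [_ [_ [_ [_ [k [xs [Hx0 [Hxk [Hinc Haff]]]]]]]]].
  exists xs, k. intros u v Huv Hnb.
  destruct (Rle_or_lt v 0) as [Hv|Hv].
  { exists 1, 0. intros x Hx. rewrite Hout by lra. ring. }
  destruct (Rle_or_lt 1 u) as [Hu|Hu].
  { exists 1, 0. intros x Hx. rewrite Hout by lra. ring. }
  destruct (Rlt_or_le u 0) as [Hu0|Hu0].
  { exfalso. apply (Hnb O). lia. lra. }
  destruct (Rlt_or_le 1 v) as [Hv1|Hv1].
  { exfalso. apply (Hnb k). lia. lra. }
  destruct (locate xs k Hinc k (le_n k) u) as [i [Hi Hi2]]. lra.
  destruct (Rlt_or_le (xs (S i)) v).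
  { exfalso. apply (Hnb (S i)). lia. lra. }
  destruct (Haff i Hi) as [m [q Hmq]]. exists m, q. intros x Hx. apply Hmq. lra.
Qed.

Lemma near_right (B : nat -> R) (m : nat) (x : R) :
  exists e, 0 < e /\ forall i, (i <= m)%nat -> ~ (x < B i < x + e).
Proof.
  induction m.
  - destruct (Rlt_or_le x (B O)).
    + exists (B O - x). split. lra. intros i Hi. assert (i = O) by lia. subst. lra.
    + exists 1. split. lra. intros i Hi. assert (i = O) by lia. subst. lra.
  - destruct IHm as [e [He Hn]].
    destruct (Rlt_or_le x (B (S m))).
    + exists (Rmin e (B (S m) - x)). split. apply Rmin_glb_lt; lra.
      intros i Hi. assert (Rmin e (B (S m) - x) <= e) by apply Rmin_l.
      assert (Rmin e (B (S m) - x) <= B (S m) - x) by apply Rmin_r.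
      destruct (Nat.eq_dec i (S m)) as [->|Hne]. lra.
      intro Hc. apply (Hn i). lia. lra.
    + exists e. split; auto. intros i Hi.
      destruct (Nat.eq_dec i (S m)) as [->|Hne]. lra. apply Hn. lia.
Qed.

Lemma near_left (B : nat -> R) (m : nat) (x : R) :
  exists e, 0 < e /\ forall i, (i <= m)%nat -> ~ (x - e < B i < x).
Proof.
  destruct (near_right (fun i => - B i) m (- x)) as [e [He Hn]].
  exists e. split; auto. intros i Hi Hc. apply (Hn i Hi). lra.
Qed.

Lemma pl_rg f : PL0 f -> forall x, exists e, 0 < e /\ affine_on f x (x + e).
Proof.
  intros Hf x. destruct (pl_aff f Hf) as [xs [k Ha]].
  destruct (near_right xs k x) as [e [He Hn]]. exists e. split; auto.
  apply Ha. lra. auto.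
Qed.

Lemma pl_lg f : PL0 f -> forall x, exists e, 0 < e /\ affine_on f (x - e) x.
Proof.
  intros Hf x. destruct (pl_aff f Hf) as [xs [k Ha]].
  destruct (near_left xs k x) as [e [He Hn]]. exists e. split; auto.
  apply Ha. lra. auto.
Qed.

Lemma pl_cont f : PL0 f -> forall x, cont f x.
Proof.
  intros Hf x e He.
  destruct (pl_lg f Hf x) as [e1 [He1 [m1 [q1 H1]]]].
  destruct (pl_rg f Hf x) as [e2 [He2 [m2 [q2 H2]]]].
  set (M := Rabs m1 + Rabs m2 + 1).
  assert (HM : 0 < M) by (unfold M; pose proof (Rabs_pos m1); pose proof (Rabs_pos m2); lra).
  exists (Rmin (Rmin e1 e2) (e / M)). split.
  { apply Rmin_glb_lt. apply Rmin_glb_lt; auto. apply Rdiv_lt_0_compat; auto. }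
  intros y Hy.
  assert (Hd1 : Rmin (Rmin e1 e2) (e / M) <= e1) by
    (eapply Rle_trans; [apply Rmin_l|apply Rmin_l]).
  assert (Hd2 : Rmin (Rmin e1 e2) (e / M) <= e2) by
    (eapply Rle_trans; [apply Rmin_l|apply Rmin_r]).
  assert (Hd3 : Rmin (Rmin e1 e2) (e / M) <= e / M) by apply Rmin_r.
  assert (Hyx : Rabs (y - x) < e / M) by lra.
  assert (HyxM : Rabs (y - x) * M < e).
  { apply (Rmult_lt_compat_r M) in Hyx; auto. unfold Rdiv in Hyx.
    rewrite Rmult_assoc, Rinv_l in Hyx by lra. lra. }
  assert (Hyx2 : Rabs (y - x) < Rmin (Rmin e1 e2) (e / M)) by exact Hy.
  apply Rabs_def2 in Hy.
  destruct (Rle_or_lt y x).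
  - rewrite (H1 y), (H1 x) by lra.
    replace (m1 * y + q1 - (m1 * x + q1)) with (m1 * (y - x)) by ring.
    rewrite Rabs_mult. assert (Rabs m1 <= M) by (unfold M; pose proof (Rabs_pos m2); lra).
    pose proof (Rabs_pos (y - x)).
    assert (Rabs m1 * Rabs (y - x) <= M * Rabs (y - x)) by (apply Rmult_le_compat_r; auto).
    lra.
  - rewrite (H2 y), (H2 x) by lra.
    replace (m2 * y + q2 - (m2 * x + q2)) with (m2 * (y - x)) by ring.
    rewrite Rabs_mult. assert (Rabs m2 <= M) by (unfold M; pose proof (Rabs_pos m1); lra).
    pose proof (Rabs_pos (y - x)).
    assert (Rabs m2 * Rabs (y - x) <= M * Rabs (y - x)) by (apply Rmult_le_compat_r; auto).
    lra.
Qed.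

Lemma pl_surj f : PL0 f -> forall y, exists x, f x = y.
Proof.
  intros Hf y. pose proof (pl_out f Hf) as Hout.
  destruct (Rle_or_lt y 0). exists y; apply Hout; auto.
  destruct (Rle_or_lt 1 y). exists y; apply Hout; auto.
  destruct (IVT (fun x => f x - y) 0 1) as [x [_ Hx]].
  - intros x. apply cont_to_pt. intros e He. destruct (pl_cont f Hf x e He) as [d [Hd Hd2]].
    exists d; split; auto. intros z Hz. replace (f z - y - (f x - y)) with (f z - f x) by ring. auto.
  - lra.
  - rewrite Hout by lra. lra.
  - rewrite Hout by lra. lra.
  - exists x. lra.
Qed.

Definition isinv (F G : R -> R) := (forall x, G (F x) = x) /\ (forall x, F (G x) = x).

Lemma inv_ok F : (exists G, isinv F G) -> isinv F (inv F).
Proof.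
  intros H. unfold inv. apply (epsilon_spec (inhabits (fun x : R => x))
    (fun g : R -> R => (forall x, g (F x) = x) /\ (forall x, F (g x) = x))). exact H.
Qed.

Lemma pl_inv f : PL0 f -> isinv f (inv f).
Proof.
  intros Hf. apply inv_ok.
  assert (Hs := pl_surj f Hf).
  exists (fun y => proj1_sig (constructive_indefinite_description _ (Hs y))).
  split; intros x.
  - destruct (constructive_indefinite_description _ (Hs (f x))) as [z Hz]. simpl.
    destruct (Rtotal_order z x) as [L|[L|L]]; auto; apply (pl_mono f Hf) in L; lra.
  - destruct (constructive_indefinite_description _ (Hs x)) as [z Hz]. simpl. auto.
Qed.

Lemma pl_tame f : PL0 f -> tame f.
Proof.
  intros Hf. destruct (pl_aff f Hf) as [xs [k Ha]]. exists xs, k.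
  intros u v Huv Hu Hv Hnb x Hx. destruct (Ha u v Huv Hnb) as [m [q Hmq]].
  rewrite Hmq by auto. rewrite Hmq in Hu, Hv by lra.
  assert (m = 1). { apply Rmult_eq_reg_r with (v - u). 2: lra. nra. }
  subst. lra.
Qed.

Lemma aff_agree (F G : R -> R) u v y1 y2 : affine_on F u v -> affine_on G u v ->
  u <= y1 < y2 -> y2 <= v -> F y1 = G y1 -> F y2 = G y2 -> forall x, u <= x <= v -> F x = G x.
Proof.
  intros [m1 [q1 H1]] [m2 [q2 H2]] Hy1 Hy2 E1 E2 x Hx.
  rewrite H1, H2 in E1, E2 by lra. rewrite H1, H2 by lra.
  assert (m1 = m2). { apply Rmult_eq_reg_r with (y2 - y1). 2: lra. nra. }
  subst. assert (q1 = q2) by lra. subst. auto.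
Qed.

Lemma tame_agree (F G Y : R -> R) : PL0 F -> PL0 G ->
  (forall x, Y x = x <-> F x = G x) -> tame Y.
Proof.
  intros HF HG HY. destruct (pl_aff F HF) as [xs [k Ha]]. destruct (pl_aff G HG) as [ys [l Hb]].
  exists (fun i => if Compare_dec.le_lt_dec i k then xs i else ys (i - S k)%nat), (k + S l)%nat.
  intros u v Huv Hu Hv Hnb x Hx. apply HY.
  apply HY in Hu. apply HY in Hv.
  apply (aff_agree F G u v u v); auto; try lra.
  - apply Ha; auto. intros i Hi. specialize (Hnb i ltac:(lia)).
    destruct (Compare_dec.le_lt_dec i k); auto; lia.
  - apply Hb; auto. intros i Hi. specialize (Hnb (i + S k)%nat ltac:(lia)).
    destruct (Compare_dec.le_lt_dec (i + S k) k). lia. replace (i + S k - S k)%nat with i in Hnb by lia. auto.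
Qed.

Lemma tame_conj (Y P Pi : R -> R) : tame Y -> isinv P Pi ->
  (forall x y, x < y -> P x < P y) -> tame (fun x => P (Y (Pi x))).
Proof.
  intros [B [K HT]] [H1 H2] Hm. assert (Hmi := inv_mono P Pi H1 H2 Hm).
  exists (fun i => P (B i)), K. intros u v Huv Hu Hv Hnb x Hx.
  assert (Hfix : forall z, P (Y (Pi z)) = z -> Y (Pi z) = Pi z).
  { intros z Hz. rewrite <- Hz at 2. rewrite H1. auto. }
  assert (Hle : forall a b, a <= b -> Pi a <= Pi b).
  { intros a b Hab. destruct (Rle_lt_or_eq_dec _ _ Hab). left; auto. subst; lra. }
  rewrite (HT (Pi u) (Pi v)); auto.
  - intros i Hi Hc. apply (Hnb i Hi). split.
    + rewrite <- (H2 u). apply Hm. lra.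
    + rewrite <- (H2 v). apply Hm. lra.
  - split; apply Hle; lra.
Qed.


Lemma iter_inv (f fi : R -> R) : isinv f fi -> forall n, isinv (Nat.iter n f) (Nat.iter n fi).
Proof.
  intros [H1 H2] n. induction n; split; intros x; auto.
  - rewrite (iter_S_r fi). simpl. rewrite H1. apply IHn.
  - rewrite (iter_S_r f). simpl. rewrite H2. apply (proj2 IHn).
Qed.

Definition Hk (f h fi : R -> R) (n : nat) (t : R) := Nat.iter n f (h (Nat.iter n fi t)).

Lemma Hk_S f h fi n t : Hk f h fi (S n) t = f (Hk f h fi n (fi t)).
Proof. unfold Hk. rewrite (iter_S_r fi). reflexivity. Qed.

Lemma Hk_inv f h fi hi n : isinv f fi -> isinv h hi -> isinv (Hk f h fi n) (Hk f hi fi n).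
Proof.
  intros Hf Hh. destruct (iter_inv f fi Hf n) as [A1 A2]. destruct Hh as [B1 B2].
  unfold Hk; split; intros x. rewrite A1, B1, A2. auto. rewrite A1, B2, A2; auto.
Qed.

Section Rel.
Variables f h fi hi : R -> R.
Hypothesis Hf : isinv f fi.
Hypothesis Hh : isinv h hi.
Notation H := (Hk f h fi).
Notation Hi := (Hk f hi fi).
Hypothesis R1 : forall t, hi (f (H 1 t)) = H 1 (hi (f t)).
Hypothesis R2 : forall t, H 2 (hi (f t)) = hi (f (H 2 t)).

Lemma fH n y : f (H n y) = H (S n) (f y).
Proof. rewrite Hk_S. rewrite (proj1 Hf). auto. Qed.

Definition Rgen i n := forall t, H i (H n t) = H (S n) (H i t).

Lemma shift i n : Rgen i n -> Rgen (S i) (S n).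
Proof.
  intros Hr t. unfold Rgen in *.
  rewrite (Hk_S f h fi i (H (S n) t)), (Hk_S f h fi n t), (Hk_S f h fi (S n) (H (S i) t)),
    (Hk_S f h fi i t).
  rewrite !(proj1 Hf). rewrite Hr. auto.
Qed.

Lemma shift_k k i n : Rgen i n -> Rgen (k + i) (k + n).
Proof. induction k; simpl; auto. intros. apply shift; auto. Qed.

Lemma base1 : Rgen 0 1.
Proof.
  intros s. simpl Hk at 1. unfold Hk at 3; simpl.
  specialize (R1 (fi (h s))). rewrite fH in R1. rewrite (proj2 Hf) in R1.
  rewrite (proj1 Hh) in R1. rewrite <- R1. rewrite (proj2 Hh). auto.
Qed.

Lemma base2 : Rgen 0 2.
Proof.
  intros s. unfold Hk at 1 4; simpl.
  specialize (R2 (fi (h s))). rewrite (proj2 Hf), (proj1 Hh) in R2.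
  rewrite fH in R2. rewrite (proj2 Hf) in R2. rewrite R2. rewrite (proj2 Hh). auto.
Qed.

Lemma R0_all : forall n, (1 <= n)%nat -> Rgen 0 n.
Proof.
  intros n. induction n as [n IH] using Wf_nat.lt_wf_ind. intros Hn.
  destruct n as [|[|[|m]]]; try lia. apply base1. apply base2.
  set (n := S (S (S m))).
  assert (Ra : Rgen (S m) (S (S m))). { pose proof (shift_k (S m) 0 1 base1) as H0. simpl in H0.
    replace (S (m + 1)) with (S (S m)) in H0 by lia. rewrite Nat.add_0_r in H0. auto. }
  assert (Rb : Rgen (S (S m)) n). { pose proof (shift_k (S (S m)) 0 1 base1) as H0. simpl in H0.
    unfold n. replace (S (S (m+1))) with (S (S (S m))) in H0 by lia. rewrite Nat.add_0_r in H0. auto. }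
  assert (Rc : Rgen 0 (S m)) by (apply IH; lia).
  assert (Rd : Rgen 0 (S (S m))) by (apply IH; lia).
  destruct (Hk_inv f h fi hi (S m) Hf Hh) as [I1 I2].
  destruct (Hk_inv f h fi hi (S (S m)) Hf Hh) as [J1 J2].
  assert (Rc' : forall t, h (H (S m) t) = H (S (S m)) (h t)) by exact Rc.
  assert (Rd' : forall t, h (H (S (S m)) t) = H (S (S (S m))) (h t)) by exact Rd.
  unfold Rgen in *. intros t. change (h (H n t) = H (S n) (h t)).
  assert (E1 : H n t = H (S m) (H (S (S m)) (Hi (S m) t))).
  { rewrite Ra. rewrite I2. auto. }
  assert (E2 : h (Hi (S m) t) = Hi (S (S m)) (h t)).
  { specialize (Rc' (Hi (S m) t)).
    rewrite I2 in Rc'. rewrite Rc'. rewrite J1. auto. }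
  rewrite E1. rewrite Rc'. rewrite Rd'.
  rewrite E2. rewrite Rb. rewrite J2. reflexivity.
Qed.

Lemma C_all : forall n, (1 <= n)%nat -> forall t, hi (f (H n t)) = H n (hi (f t)).
Proof.
  intros n Hn t. pose proof (R0_all n Hn (hi (f t))) as E.
  change (h (H n (hi (f t))) = H (S n) (h (hi (f t)))) in E.
  rewrite (proj2 Hh) in E. rewrite <- fH in E. rewrite <- E. apply (proj1 Hh).
Qed.
End Rel.


Lemma cont_id x : cont (fun y => y) x.
Proof. intros e He. exists e; split; auto. Qed.

Lemma cont_minus F G x : cont F x -> cont G x -> cont (fun y => F y - G y) x.
Proof.
  intros HF HG e He. destruct (HF (e/2) ltac:(lra)) as [d1 [Hd1 H1]].
  destruct (HG (e/2) ltac:(lra)) as [d2 [Hd2 H2]].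
  exists (Rmin d1 d2). split. apply Rmin_glb_lt; auto.
  intros y Hy. assert (Rmin d1 d2 <= d1) by apply Rmin_l. assert (Rmin d1 d2 <= d2) by apply Rmin_r.
  specialize (H1 y ltac:(lra)). specialize (H2 y ltac:(lra)).
  replace (F y - G y - (F x - G x)) with ((F y - F x) - (G y - G x)) by ring.
  eapply Rle_lt_trans. apply Rabs_triang. rewrite Rabs_Ropp. lra.
Qed.

Lemma orb_left (phi : R -> R) y0 x : (forall z, cont phi z) -> y0 < x -> phi y0 = 0 -> phi x <> 0 ->
  exists u, y0 <= u < x /\ phi u = 0 /\ forall z, u < z <= x -> phi z <> 0.
Proof.
  intros Hc Hyx H0 Hx.
  destruct (completeness (fun z => y0 <= z <= x /\ phi z = 0)) as [u [Hu1 Hu2]].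
  { exists x. intros z [Hz _]. lra. }
  { exists y0. split; auto; lra. }
  assert (Hy0u : y0 <= u) by (apply Hu1; split; auto; lra).
  assert (Hux : u <= x) by (apply Hu2; intros z [Hz _]; lra).
  assert (Hpu : phi u = 0).
  { destruct (Req_dec (phi u) 0) as [E|E]; auto. exfalso.
    assert (Hp : 0 < Rabs (phi u)) by (apply Rabs_pos_lt; auto).
    destruct (Hc u (Rabs (phi u)) Hp) as [dd [Hdd Hd]].
    destruct (classic (exists z, u - dd < z /\ y0 <= z <= x /\ phi z = 0)) as [[z [Hz1 [Hz2 Hz3]]]|Hn].
    - assert (z <= u) by (apply Hu1; auto). specialize (Hd z). rewrite Hz3 in Hd.
      assert (Rabs (z - u) < dd) by (rewrite Rabs_left1; lra). specialize (Hd H1).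
      replace (0 - phi u) with (- phi u) in Hd by ring. rewrite Rabs_Ropp in Hd. lra.
    - assert (u <= u - dd). { apply Hu2. intros z Hz. destruct (Rle_or_lt z (u - dd)); auto.
        exfalso. apply Hn. exists z. auto. }
      lra. }
  exists u. split. split; auto. destruct (Rle_lt_or_eq_dec _ _ Hux); auto. subst. contradiction.
  split; auto. intros z Hz Hpz. assert (z <= u) by (apply Hu1; split; auto; lra). lra.
Qed.

Lemma orb_right (phi : R -> R) y0 x : (forall z, cont phi z) -> x < y0 -> phi y0 = 0 -> phi x <> 0 ->
  exists w, x < w <= y0 /\ phi w = 0 /\ forall z, x <= z < w -> phi z <> 0.
Proof.
  intros Hc Hyx H0 Hx.
  destruct (orb_left (fun y => phi (- y)) (- y0) (- x)) as [u [Hu1 [Hu2 Hu3]]].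
  - intros z. apply cont_neg. apply Hc.
  - lra.
  - rewrite Ropp_involutive; auto.
  - rewrite Ropp_involutive; auto.
  - exists (- u). split. lra. split; auto. intros z Hz. specialize (Hu3 (- z)).
    rewrite Ropp_involutive in Hu3. apply Hu3. lra.
Qed.

Lemma closed_ends (phi : R -> R) a c : (forall z, cont phi z) -> a < c ->
  (forall x, a < x < c -> phi x = 0) -> phi a = 0 /\ phi c = 0.
Proof.
  intros Hc Hac H0. split.
  - destruct (Req_dec (phi a) 0) as [E|E]; auto. exfalso.
    assert (Hp : 0 < Rabs (phi a)) by (apply Rabs_pos_lt; auto).
    destruct (Hc a _ Hp) as [dd [Hdd Hd]].
    set (z := a + Rmin dd (c - a) / 2).
    assert (Rmin dd (c - a) <= dd) by apply Rmin_l. assert (Rmin dd (c - a) <= c - a) by apply Rmin_r.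
    assert (0 < Rmin dd (c - a)) by (apply Rmin_glb_lt; lra).
    specialize (Hd z). rewrite (H0 z) in Hd by (unfold z; lra).
    replace (0 - phi a) with (- phi a) in Hd by ring. rewrite Rabs_Ropp in Hd.
    assert (Rabs (z - a) < dd) by (unfold z; rewrite Rabs_right; lra). lra.
  - destruct (Req_dec (phi c) 0) as [E|E]; auto. exfalso.
    assert (Hp : 0 < Rabs (phi c)) by (apply Rabs_pos_lt; auto).
    destruct (Hc c _ Hp) as [dd [Hdd Hd]].
    set (z := c - Rmin dd (c - a) / 2).
    assert (Rmin dd (c - a) <= dd) by apply Rmin_l. assert (Rmin dd (c - a) <= c - a) by apply Rmin_r.
    assert (0 < Rmin dd (c - a)) by (apply Rmin_glb_lt; lra).
    specialize (Hd z). rewrite (H0 z) in Hd by (unfold z; lra).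
    replace (0 - phi c) with (- phi c) in Hd by ring. rewrite Rabs_Ropp in Hd.
    assert (Rabs (z - c) < dd) by (unfold z; rewrite Rabs_left; lra). lra.
Qed.

Definition Germ (F : R -> R) (b m : R) := 0 < m /\ exists e, 0 < e /\
  forall y, b <= y <= b + e -> F y = b + m * (y - b).

Lemma germ_pl F b : PL0 F -> F b = b -> exists m, Germ F b m.
Proof.
  intros HF Hb. destruct (pl_rg F HF b) as [e [He [m [q Hmq]]]].
  assert (Hq : q = b - m * b) by (rewrite Hmq in Hb by lra; lra).
  exists m. split.
  - pose proof (pl_mono F HF b (b + e) ltac:(lra)). rewrite !Hmq in H by lra.
    apply Rmult_lt_reg_r with e; lra.
  - exists e. split; auto. intros y Hy. rewrite Hmq by lra. rewrite Hq. ring.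
Qed.

Lemma germ_inv F FI b m : Germ F b m -> isinv F FI -> Germ FI b (/ m).
Proof.
  intros [Hm [e [He HF]]] [I1 I2]. split. apply Rinv_0_lt_compat; auto.
  exists (m * e). split. apply Rmult_lt_0_compat; auto.
  intros y Hy. set (z := b + / m * (y - b)).
  assert (Hz : b <= z <= b + e).
  { unfold z. assert (0 <= / m * (y - b)) by (apply Rmult_le_pos; [left; apply Rinv_0_lt_compat; auto|lra]).
    split. lra. assert (/ m * (y - b) <= / m * (m * e)).
    { apply Rmult_le_compat_l. left; apply Rinv_0_lt_compat; auto. lra. }
    rewrite <- Rmult_assoc, Rinv_l in H0 by lra. lra. }
  assert (F z = y) by (rewrite HF by auto; unfold z; field; lra).
  rewrite <- H. rewrite I1. auto.
Qed.

Lemma germ_comp F G b m1 m2 : Germ F b m1 -> Germ G b m2 -> Germ (fun y => G (F y)) b (m2 * m1).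
Proof.
  intros [Hm1 [e1 [He1 HF]]] [Hm2 [e2 [He2 HG]]]. split. apply Rmult_lt_0_compat; auto.
  exists (Rmin e1 (e2 / m1)). split. apply Rmin_glb_lt; auto. apply Rdiv_lt_0_compat; auto.
  intros y Hy. assert (Rmin e1 (e2 / m1) <= e1) by apply Rmin_l.
  assert (Rmin e1 (e2 / m1) <= e2 / m1) by apply Rmin_r.
  rewrite HF by lra. rewrite HG. ring.
  assert (m1 * (y - b) <= m1 * (e2 / m1)) by (apply Rmult_le_compat_l; lra).
  replace (m1 * (e2 / m1)) with e2 in H1 by (field; lra).
  assert (0 <= m1 * (y - b)) by (apply Rmult_le_pos; lra). lra.
Qed.

Lemma germ_eq F G b m m' : Germ F b m -> Germ G b m' -> m = m' ->
  exists e, 0 < e /\ forall y, b <= y <= b + e -> F y = G y.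
Proof.
  intros [_ [e1 [He1 HF]]] [_ [e2 [He2 HG]]] <-. exists (Rmin e1 e2). split. apply Rmin_glb_lt; auto.
  intros y Hy. assert (Rmin e1 e2 <= e1) by apply Rmin_l. assert (Rmin e1 e2 <= e2) by apply Rmin_r.
  rewrite HF, HG by lra. auto.
Qed.


Section Main.
Variables f h fi hi : R -> R.
Variables a c : R.
Variable n : nat.
Variables b d : nat -> R.
Hypothesis Hf : PL0 f.
Hypothesis Hh : PL0 h.
Hypothesis Hfi : isinv f fi.
Hypothesis Hhi : isinv h hi.
Hypothesis HC : forall N, (1 <= N)%nat -> forall t,
  hi (f (Hk f h fi N t)) = Hk f h fi N (hi (f t)).
Hypothesis Hup : up_bump f a c.
Hypothesis Hnot : ~ orbital h a c.
Hypothesis Hn : (1 <= n)%nat.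
Hypothesis Horb : forall i, (1 <= i <= n)%nat -> orbital h (b i) (d i) /\ b i < c /\ a < d i.
Hypothesis Hord : forall i, (1 <= i < n)%nat -> d i <= b (S i).
Hypothesis Hall : forall x y, orbital h x y -> x < c -> a < y ->
     exists i, (1 <= i <= n)%nat /\ x = b i /\ y = d i.

Notation fN N := (Nat.iter N f).
Notation fiN N := (Nat.iter N fi).

Lemma fmono : forall x y, x < y -> f x < f y. Proof. apply pl_mono; auto. Qed.
Lemma hmono : forall x y, x < y -> h x < h y. Proof. apply pl_mono; auto. Qed.
Lemma fimono : forall x y, x < y -> fi x < fi y.
Proof. apply (inv_mono f fi (proj1 Hfi) (proj2 Hfi) fmono). Qed.
Lemma himono : forall x y, x < y -> hi x < hi y.
Proof. apply (inv_mono h hi (proj1 Hhi) (proj2 Hhi) hmono). Qed.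

Lemma le_of_lt (F : R -> R) : (forall x y, x < y -> F x < F y) -> forall x y, x <= y -> F x <= F y.
Proof. intros HF x y H. destruct (Rle_lt_or_eq_dec _ _ H). left; auto. subst; lra. Qed.

Lemma lt_rev (F : R -> R) : (forall x y, x < y -> F x < F y) -> forall x y, F x < F y -> x < y.
Proof. intros HF x y H. destruct (Rlt_or_le x y); auto. apply (le_of_lt F HF) in H0. lra. Qed.

Lemma iter_mono (F : R -> R) : (forall x y, x < y -> F x < F y) ->
  forall N x y, x < y -> Nat.iter N F x < Nat.iter N F y.
Proof. intros HF N. induction N; simpl; auto. Qed.

Lemma fa : f a = a. Proof. destruct Hup as [[_ [_ [Ha _]]] _]. unfold supp in Ha. apply NNPP in Ha; auto. Qed.
Lemma fc : f c = c. Proof. destruct Hup as [[_ [_ [_ Hc]]] _]. unfold supp in Hc. apply NNPP in Hc; auto. Qed.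
Lemma ac : a < c. Proof. destruct Hup as [[H _] _]; auto. Qed.
Lemma fup : forall x, a < x < c -> x < f x. Proof. destruct Hup as [_ H]; auto. Qed.

Lemma fA : forall x, a < x < c -> a < f x < c.
Proof. intros x Hx. pose proof (fup x Hx). pose proof (fmono x c ltac:(lra)). rewrite fc in H0. lra. Qed.

Lemma fidown : forall x, a < x < c -> fi x < x.
Proof.
  intros x Hx. destruct (Rlt_or_le (fi x) x); auto. exfalso.
  assert (a < fi x). { pose proof (fimono a x ltac:(lra)). rewrite <- fa in H0 at 1.
    rewrite (proj1 Hfi) in H0. lra. }
  destruct (Rle_lt_or_eq_dec _ _ H).
  - apply fmono in r. rewrite (proj2 Hfi) in r. pose proof (fup x Hx). lra.
  - assert (f (fi x) = f x) by (rewrite <- e; auto). rewrite (proj2 Hfi) in H1.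
    pose proof (fup x Hx). lra.
Qed.

Lemma fiA : forall x, a < x < c -> a < fi x < c.
Proof.
  intros x Hx. pose proof (fidown x Hx). pose proof (fimono a x ltac:(lra)).
  rewrite <- fa in H0 at 1. rewrite (proj1 Hfi) in H0. lra.
Qed.

Lemma fNA : forall N x, a < x < c -> a < fN N x < c.
Proof. induction N; simpl; intros; auto. apply fA; auto. Qed.
Lemma fiNA : forall N x, a < x < c -> a < fiN N x < c.
Proof. induction N; simpl; intros; auto. apply fiA; auto. Qed.

Lemma fN_fix : forall N x, f x = x -> fN N x = x.
Proof. induction N; simpl; intros; auto. rewrite IHN; auto. Qed.
Lemma fiN_fix : forall N x, f x = x -> fiN N x = x.
Proof. induction N; simpl; intros; auto. rewrite IHN; auto. rewrite <- H at 1. apply (proj1 Hfi). Qed.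

Lemma fN_fix_gen (s : R -> R) bb : s bb = bb -> forall j, Nat.iter j s bb = bb.
Proof. intros H j; induction j; simpl; auto. rewrite IHj; auto. Qed.

Lemma fN_step : forall N x, a < x < c -> fN N x < fN (S N) x.
Proof. intros. simpl. apply fup. apply fNA; auto. Qed.

Lemma fN_le_idx : forall N M x, a < x < c -> (N <= M)%nat -> fN N x <= fN M x.
Proof.
  intros N M x Hx HNM. induction HNM. lra. pose proof (fN_step m x Hx). lra.
Qed.

Lemma T2 : forall x z, a < x < c -> z < c -> exists N, z < fN N x.
Proof.
  intros x z Hx Hz. destruct (classic (exists N, z < fN N x)) as [H|H]; auto. exfalso.
  destruct (inc_lim (fun j => fN j x) z f (fun y => y)) as [L [HL1 HL2]].
  - intros j. left. apply fN_step; auto.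
  - intros j. destruct (Rle_or_lt (fN j x) z); auto. exfalso; apply H; exists j; auto.
  - apply pl_cont; auto.
  - apply cont_id.
  - intros j. reflexivity.
  - simpl in HL1. pose proof (fup L ltac:(lra)). lra.
Qed.

Lemma T2' : forall x z, a < x < c -> a < z -> exists N, fiN N x < z.
Proof.
  intros x z Hx Hz. destruct (classic (exists N, fiN N x < z)) as [H|H]; auto. exfalso.
  destruct (dec_lim (fun j => fiN j x) z (fun y => y) f) as [L [HL1 HL2]].
  - intros j. simpl. left. apply fidown. apply fiNA; auto.
  - intros j. destruct (Rle_or_lt z (fiN j x)); auto. exfalso; apply H; exists j; auto.
  - apply cont_id.
  - apply pl_cont; auto.
  - intros j. simpl. rewrite (proj2 Hfi). auto.
  - simpl in HL1. pose proof (fup L ltac:(lra)). lra.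
Qed.

Definition g x := hi (f x).
Definition gi x := fi (h x).
Lemma g_inv : isinv g gi.
Proof. unfold g, gi; split; intros x. rewrite (proj2 Hhi), (proj1 Hfi); auto.
  rewrite (proj2 Hfi), (proj1 Hhi); auto. Qed.
Lemma gmono : forall x y, x < y -> g x < g y.
Proof. intros. unfold g. apply himono, fmono; auto. Qed.
Lemma g_fix : forall x, g x = x <-> f x = h x.
Proof. unfold g; split; intros H. rewrite <- H at 2. rewrite (proj2 Hhi); auto.
  rewrite H. apply (proj1 Hhi). Qed.
Lemma g_tame : tame g.
Proof. apply (tame_agree f h g Hf Hh g_fix). Qed.

Lemma H_tame : forall N, tame (Hk f h fi N).
Proof.
  intros N. unfold Hk. apply (tame_conj h (fN N) (fiN N)). apply pl_tame; auto.
  apply iter_inv; auto. apply iter_mono. apply fmono.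
Qed.

Lemma H_mono : forall N x y, x < y -> Hk f h fi N x < Hk f h fi N y.
Proof. intros. unfold Hk. apply iter_mono. apply fmono. apply hmono. apply iter_mono; auto. apply fimono. Qed.

Definition nb (Y : R -> R) (S : R -> Prop) (e : R) :=
  (exists dd, 0 < dd /\ forall x, e < x < e + dd -> S x /\ Y x <> x) \/
  (exists dd, 0 < dd /\ forall x, e - dd < x < e -> S x /\ Y x <> x).

Lemma F1 : forall e, h e = e -> nb h (fun _ => True) e ->
  forall N, (1 <= N)%nat -> h (fN N e) = fN (S N) e.
Proof.
  intros e He Hnb N HN.
  destruct (iter_inv f fi Hfi N) as [I1 I2].
  assert (Hm := iter_mono f fmono N).
  assert (Hmi := iter_mono fi fimono N).
  assert (Hx : g (fN N e) = fN N e).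
  { apply (P_gen g gi (Hk f h fi N) (fun _ => True)); auto.
    - apply g_inv.
    - apply g_inv.
    - apply gmono.
    - intros x _. symmetry. apply HC; auto.
    - apply H_tame.
    - unfold Hk. rewrite I1, He. auto.
    - assert (Hmov : forall x, Hk f h fi N x = x -> h (fiN N x) = fiN N x).
      { unfold Hk. intros x Hx. rewrite <- Hx at 2. rewrite I1. auto. }
      destruct Hnb as [[dd [Hdd Hx]]|[dd [Hdd Hx]]].
      + left. exists (fN N (e + dd) - fN N e). split. pose proof (Hm e (e + dd)). lra.
        intros x Hxx. split; auto. intros E. apply Hmov in E.
        apply (Hx (fiN N x)); auto. split.
        * rewrite <- (I1 e). apply Hmi. lra.
        * rewrite <- (I1 (e + dd)). apply Hmi. lra.
      + right. exists (fN N e - fN N (e - dd)). split. pose proof (Hm (e - dd) e). lra.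
        intros x Hxx. split; auto. intros E. apply Hmov in E.
        apply (Hx (fiN N x)); auto. split.
        * rewrite <- (I1 (e - dd)). apply Hmi. lra.
        * rewrite <- (I1 e). apply Hmi. lra. }
  apply g_fix in Hx. simpl. auto.
Qed.

Lemma F2 : forall e, f e = h e -> nb g (fun _ => True) e ->
  forall N, (1 <= N)%nat -> h (fiN N e) = fiN N e.
Proof.
  intros e He Hnb N HN.
  destruct (iter_inv f fi Hfi N) as [I1 I2].
  destruct (Hk_inv f h fi hi N Hfi Hhi) as [J1 J2].
  assert (Hx : Hk f h fi N e = e).
  { apply (P_gen (Hk f h fi N) (Hk f hi fi N) g (fun _ => True)); auto.
    - apply H_mono.
    - intros x _. apply HC; auto.
    - apply g_tame.
    - apply g_fix; auto. }
  unfold Hk in Hx. rewrite <- Hx at 2. rewrite I1. auto.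
Qed.


Lemma a_c_01 : 0 <= a /\ c <= 1.
Proof.
  pose proof ac as Hac. split.
  - destruct (Rle_or_lt 0 a); auto. exfalso.
    set (x := (a + Rmin 0 c) / 2). assert (Rmin 0 c <= 0) by apply Rmin_l.
    assert (Rmin 0 c <= c) by apply Rmin_r. assert (a < Rmin 0 c) by (apply Rmin_glb_lt; lra).
    pose proof (fup x ltac:(unfold x; lra)). rewrite (pl_out f Hf x) in H3 by (unfold x; lra). lra.
  - destruct (Rle_or_lt c 1); auto. exfalso.
    set (x := (c + Rmax 1 a) / 2). assert (1 <= Rmax 1 a) by apply Rmax_l.
    assert (a <= Rmax 1 a) by apply Rmax_r. assert (Rmax 1 a < c) by (apply Rmax_lub_lt; lra).
    pose proof (fup x ltac:(unfold x; lra)). rewrite (pl_out f Hf x) in H3 by (unfold x; lra). lra.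
Qed.

Lemma phi_cont : forall z, cont (fun y => f y - h y) z.
Proof. intros z. apply cont_minus; apply pl_cont; auto. Qed.

Lemma orbF : forall i, (1 <= i <= n)%nat -> b i < d i /\ h (b i) = b i /\ h (d i) = d i /\
  (forall x, b i < x < d i -> h x <> x) /\ b i < c /\ a < d i.
Proof.
  intros i Hi. destruct (Horb i Hi) as [[H1 [H2 [H3 H4]]] [H5 H6]]. unfold supp in *.
  repeat split; auto; apply NNPP; auto.
Qed.

Lemma b_mono : forall i, (1 <= i <= n)%nat -> b 1%nat <= b i /\ d i <= d n.
Proof.
  assert (Hb : forall i, (1 <= i <= n)%nat -> b 1%nat <= b i).
  { intros i Hi. induction i. lia. destruct (Nat.eq_dec i 0). subst. lra.
    assert (b 1%nat <= b i) by (apply IHi; lia).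
    pose proof (orbF i ltac:(lia)). pose proof (Hord i ltac:(lia)). lra. }
  assert (Hd : forall k i, (1 <= i)%nat -> (i + k = n)%nat -> d i <= d n).
  { induction k; intros i Hi Hik. replace i with n by lia. lra.
    pose proof (IHk (S i) ltac:(lia) ltac:(lia)).
    pose proof (orbF (S i) ltac:(lia)). pose proof (Hord i ltac:(lia)). lra. }
  intros i Hi. split; auto. apply (Hd (n - i)%nat); lia.
Qed.

Lemma in_orb : forall x, a < x < c -> h x <> x -> exists i, (1 <= i <= n)%nat /\ b i < x < d i.
Proof.
  intros x Hx Hhx. pose proof a_c_01.
  assert (Hc : forall z, cont (fun y => h y - y) z) by (intros; apply cont_minus; [apply pl_cont; auto|apply cont_id]).
  destruct (orb_left (fun y => h y - y) (-1) x Hc) as [u [Hu1 [Hu2 Hu3]]].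
  lra. rewrite (pl_out h Hh) by lra. lra. lra.
  destruct (orb_right (fun y => h y - y) 2 x Hc) as [w [Hw1 [Hw2 Hw3]]].
  lra. rewrite (pl_out h Hh) by lra. lra. lra.
  destruct (Hall u w) as [i [Hi [-> ->]]].
  - split. lra. split. intros z Hz. unfold supp. destruct (Rle_or_lt z x).
    specialize (Hu3 z ltac:(lra)). lra. specialize (Hw3 z ltac:(lra)). lra.
    unfold supp. split; lra.
  - lra.
  - lra.
  - exists i. split; auto. lra.
Qed.

Lemma germ_H12 : forall bb, f bb = bb -> h bb = bb ->
  exists e, 0 < e /\ forall y, bb <= y <= bb + e -> Hk f h fi 1 y = Hk f h fi 2 y.
Proof.
  intros bb Hfb Hhb. destruct (germ_pl f bb Hf Hfb) as [mf Gf].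
  destruct (germ_pl h bb Hh Hhb) as [mh Gh].
  assert (Gfi := germ_inv f fi bb mf Gf Hfi).
  assert (G1 := germ_comp _ _ _ _ _ (germ_comp _ _ _ _ _ Gfi Gh) Gf).
  assert (G2 := germ_comp _ _ _ _ _ (germ_comp _ _ _ _ _ (germ_comp _ _ _ _ _ (germ_comp _ _ _ _ _ Gfi Gfi) Gh) Gf) Gf).
  destruct Gf as [Hmf _].
  destruct (germ_eq _ _ _ _ _ G1 G2) as [e [He Hy]]. field. lra.
  exists e. split; auto.
Qed.

Lemma spread : forall bb dd e, bb < dd -> f bb = bb -> h bb = bb ->
  (forall z, bb < z < dd -> f z <> h z) -> 0 < e ->
  (forall y, bb <= y <= bb + e -> Hk f h fi 1 y = Hk f h fi 2 y) ->
  forall x, bb < x < dd -> Hk f h fi 1 x = Hk f h fi 2 x.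
Proof.
  intros bb dd e Hbd Hfb Hhb Hne He Hg x Hx.
  set (D := fun y => Hk f h fi 1 y = Hk f h fi 2 y).
  assert (Dg : forall y, D (g y) -> D y).
  { unfold D, g. intros y Hy. pose proof (HC 1 ltac:(lia) y). pose proof (HC 2 ltac:(lia) y).
    rewrite <- Hy in H0. rewrite <- H in H0. apply (f_equal h) in H0.
    rewrite !(proj2 Hhi) in H0. apply (f_equal fi) in H0. rewrite !(proj1 Hfi) in H0. auto. }
  assert (Dgi : forall y, D (gi y) -> D y).
  { intros y Hy. rewrite <- (proj2 g_inv y). unfold D in *. unfold g.
    rewrite <- (HC 1 ltac:(lia)), <- (HC 2 ltac:(lia)). rewrite Hy. auto. }
  assert (gb : g bb = bb) by (apply g_fix; rewrite Hfb, Hhb; auto).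
  assert (gib : gi bb = bb) by (unfold gi; rewrite Hhb; rewrite <- Hfb at 1; apply (proj1 Hfi)).
  assert (Hgx : g x <> x) by (intros E; apply g_fix in E; apply (Hne x); auto).
  assert (Main : forall s, (forall x y, x < y -> s x < s y) -> s bb = bb -> s x < x ->
     (forall y, D (s y) -> D y) ->
     ((forall j, f (Nat.iter j s x) = h (Nat.iter (S j) s x)) \/
      (forall j, h (Nat.iter j s x) = f (Nat.iter (S j) s x))) -> D x).
  { intros s Hs Hsb Hsx Ds Hrel.
    assert (Im := iter_mono s Hs).
    assert (Hdec : forall j, Nat.iter (S j) s x < Nat.iter j s x).
    { intros j. rewrite iter_S_r. apply Im; auto. }
    assert (Hgt : forall j, bb < Nat.iter j s x).
    { intros j. rewrite <- (fN_fix_gen s bb Hsb j). apply Im. lra. }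
    assert (Dit : forall j, D (Nat.iter j s x) -> D x).
    { induction j; simpl; intros; auto. }
    destruct (classic (exists j, Nat.iter j s x < bb + e)) as [[j Hj]|Hnn].
    - apply (Dit j). apply Hg. pose proof (Hgt j). lra.
    - exfalso.
      assert (Hb : forall j, bb + e <= Nat.iter j s x).
      { intros j. destruct (Rle_or_lt (bb + e) (Nat.iter j s x)); auto. exfalso; apply Hnn; eauto. }
      destruct Hrel as [Hr|Hr].
      + destruct (dec_lim (fun j => Nat.iter j s x) (bb + e) f h) as [L [HL1 HL2]].
        intros j; left; apply Hdec. auto. apply pl_cont; auto. apply pl_cont; auto. auto.
        simpl in HL1. apply (Hne L). lra. auto.
      + destruct (dec_lim (fun j => Nat.iter j s x) (bb + e) h f) as [L [HL1 HL2]].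
        intros j; left; apply Hdec. auto. apply pl_cont; auto. apply pl_cont; auto. auto.
        simpl in HL1. apply (Hne L). lra. auto. }
  destruct (Rlt_or_le (g x) x) as [Hl|Hl].
  - apply (Main g gmono gb Hl Dg). left. intros j. simpl. unfold g at 2. rewrite (proj2 Hhi). auto.
  - assert (x < g x) by lra.
    assert (gi x < x). { pose proof (inv_mono g gi (proj1 g_inv) (proj2 g_inv) gmono x (g x) H).
      rewrite (proj1 g_inv) in H0. auto. }
    apply (Main gi (inv_mono g gi (proj1 g_inv) (proj2 g_inv) gmono) gib H0 Dgi).
    right. intros j. simpl. unfold gi at 2. rewrite (proj2 Hfi). auto.
Qed.

Lemma partI : a < b 1%nat.
Proof.
  destruct (Rlt_or_le a (b 1%nat)) as [|Hb1]; auto. exfalso.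
  pose proof ac as Hac. pose proof a_c_01 as H01.
  destruct (orbF 1 ltac:(lia)) as [Hbd [Hhb [Hhd [Hmov [_ Had]]]]].
  set (b1 := b 1%nat) in *. set (d1 := d 1%nat) in *.
  set (d0 := Rmin d1 c - a).
  assert (Hd0 : 0 < d0) by (unfold d0; assert (a < Rmin d1 c) by (apply Rmin_glb_lt; lra); lra).
  assert (HR : forall x, a < x < a + d0 -> h x <> x).
  { intros x Hx. apply Hmov. assert (Rmin d1 c <= d1) by apply Rmin_l. unfold d0 in Hx. lra. }
  assert (fiS : forall N x, a < x < c -> fiN (S N) x <= fiN N x).
  { intros. simpl. left. apply fidown. apply fiNA; auto. }
  assert (Step1 : forall x y, a < x < c -> a < y < c -> f x <> h x -> f y = h y -> False).
  { intros x y Hx Hy Hfx Hfy.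
    assert (Hpx : f x - h x <> 0) by (intro; apply Hfx; lra).
    destruct (Rtotal_order y x) as [Hyx|[->|Hyx]].
    - destruct (orb_left _ y x phi_cont Hyx ltac:(lra) Hpx) as [u [Hu1 [Hu2 Hu3]]].
      assert (Hu : a < u < c) by lra.
      assert (HF := F2 u ltac:(lra)).
      destruct (T2' u (a + d0) Hu ltac:(lra)) as [N HN].
      assert (Hh2 : h (fiN (S N) u) = fiN (S N) u).
      { apply HF. left. exists (x - u). split. lra. intros z Hz. split; auto.
        intros E. apply g_fix in E. apply (Hu3 z). lra. lra. lia. }
      pose proof (fiS N u Hu). pose proof (fiNA (S N) u Hu).
      apply (HR (fiN (S N) u)). lra. auto.
    - contradiction.
    - destruct (orb_right _ y x phi_cont Hyx ltac:(lra) Hpx) as [w [Hw1 [Hw2 Hw3]]].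
      assert (Hw : a < w < c) by lra.
      assert (HF := F2 w ltac:(lra)).
      destruct (T2' w (a + d0) Hw ltac:(lra)) as [N HN].
      assert (Hh2 : h (fiN (S N) w) = fiN (S N) w).
      { apply HF. right. exists (w - x). split. lra. intros z Hz. split; auto.
        intros E. apply g_fix in E. apply (Hw3 z). lra. lra. lia. }
      pose proof (fiS N w Hw). pose proof (fiNA (S N) w Hw).
      apply (HR (fiN (S N) w)). lra. auto. }
  destruct (classic (exists x, a < x < c /\ f x <> h x)) as [[x0' [Hx0' Hne0]]|Hall_eq].
  2:{
    apply Hnot.
    assert (Heq : forall x, a < x < c -> f x - h x = 0).
    { intros x Hx. destruct (Req_dec (f x) (h x)). lra. exfalso; apply Hall_eq; eauto. }
    destruct (closed_ends _ a c phi_cont Hac Heq) as [Ea Ec].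
    split; auto. split.
    - intros x Hx. unfold supp. pose proof (Heq x Hx). pose proof (fup x Hx). lra.
    - unfold supp. rewrite fa in Ea. rewrite fc in Ec. split; lra. }
  assert (G : forall x, a < x < c -> f x <> h x).
  { intros x Hx E. apply (Step1 x0' x); auto. }
  assert (Hd1c : c <= d1).
  { destruct (Rle_or_lt c d1); auto. exfalso.
    assert (E := F1 d1 Hhd ltac:(right; exists (d1 - b1); split; [lra|intros z Hz; split; auto; apply Hmov; lra]) 1 ltac:(lia)).
    simpl in E. apply (G (f d1)). apply fA; lra. auto. }
  (* (b) g-orbital containing A *)
  set (x0 := (a + c) / 2).
  assert (Hpx0 : f x0 - h x0 <> 0) by (intro; apply (G x0); [unfold x0; lra|lra]).
  destruct (orb_left _ (-1) x0 phi_cont ltac:(unfold x0; lra)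
    ltac:(cbv beta; rewrite (pl_out f Hf), (pl_out h Hh) by lra; lra) Hpx0) as [u [Hu1 [Hu2 Hu3]]].
  destruct (orb_right _ 2 x0 phi_cont ltac:(unfold x0; lra)
    ltac:(cbv beta; rewrite (pl_out f Hf), (pl_out h Hh) by lra; lra) Hpx0) as [w [Hw1 [Hw2 Hw3]]].
  assert (Hua : u <= a).
  { destruct (Rle_or_lt u a); auto. exfalso. apply (G u). unfold x0 in Hu1; lra. lra. }
  assert (Hwc : c <= w).
  { destruct (Rle_or_lt c w); auto. exfalso. apply (G w). unfold x0 in Hw1; lra. lra. }
  assert (Hm := iter_mono f fmono). assert (Hmi := iter_mono fi fimono).
  assert (Hub : forall N, (1 <= N)%nat -> u = fN N b1).
  { intros N HN. apply Rle_antisym.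
    - assert (E := F2 u ltac:(lra) ltac:(left; exists (x0 - u); split; [lra|intros z Hz; split; auto; intros E; apply g_fix in E; apply (Hu3 z); lra]) N HN).
      assert (fiN N u <= a) by (rewrite <- (fiN_fix N a fa); apply (le_of_lt _ (Hmi N)); auto).
      assert (fiN N u <= b1).
      { destruct (Rle_or_lt (fiN N u) b1); auto. exfalso. apply (Hmov (fiN N u)). lra. auto. }
      rewrite <- (proj2 (iter_inv f fi Hfi N) u). apply (le_of_lt _ (Hm N)); auto.
    - assert (E := F1 b1 Hhb ltac:(left; exists (d1 - b1); split; [lra|intros z Hz; split; auto; apply Hmov; lra]) N HN).
      assert (fN N b1 <= a) by (rewrite <- (fN_fix N a fa); apply (le_of_lt _ (Hm N)); auto).
      destruct (Rle_or_lt (fN N b1) u); auto. exfalso. apply (Hu3 (fN N b1)). unfold x0; lra.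
      rewrite E. simpl. lra. }
  assert (Hwd : forall N, (1 <= N)%nat -> w = fN N d1).
  { intros N HN. apply Rle_antisym.
    - assert (E := F1 d1 Hhd ltac:(right; exists (d1 - b1); split; [lra|intros z Hz; split; auto; apply Hmov; lra]) N HN).
      assert (c <= fN N d1) by (rewrite <- (fN_fix N c fc); apply (le_of_lt _ (Hm N)); auto).
      destruct (Rle_or_lt w (fN N d1)); auto. exfalso. apply (Hw3 (fN N d1)). unfold x0; lra.
      rewrite E. simpl. lra.
    - assert (E := F2 w ltac:(lra) ltac:(right; exists (w - x0); split; [lra|intros z Hz; split; auto; intros E; apply g_fix in E; apply (Hw3 z); lra]) N HN).
      assert (c <= fiN N w) by (rewrite <- (fiN_fix N c fc); apply (le_of_lt _ (Hmi N)); auto).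
      assert (d1 <= fiN N w).
      { destruct (Rle_or_lt d1 (fiN N w)); auto. exfalso. apply (Hmov (fiN N w)). lra. auto. }
      rewrite <- (proj2 (iter_inv f fi Hfi N) w). apply (le_of_lt _ (Hm N)); auto. }
  assert (Hfb1 : f b1 = b1).
  { pose proof (Hub 1%nat ltac:(lia)). pose proof (Hub 2%nat ltac:(lia)). simpl in *.
    assert (E2 : f (f b1) = f b1) by lra. apply (f_equal fi) in E2. rewrite !(proj1 Hfi) in E2. auto. }
  assert (Hfd1 : f d1 = d1).
  { pose proof (Hwd 1%nat ltac:(lia)). pose proof (Hwd 2%nat ltac:(lia)). simpl in *.
    assert (E2 : f (f d1) = f d1) by lra. apply (f_equal fi) in E2. rewrite !(proj1 Hfi) in E2. auto. }
  assert (Hu_b1 : u = b1) by (rewrite (Hub 1%nat) by lia; simpl; auto).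
  assert (Hw_d1 : w = d1) by (rewrite (Hwd 1%nat) by lia; simpl; auto).
  subst u w.
  assert (Hne : forall z, b1 < z < d1 -> f z <> h z).
  { intros z Hz E. destruct (Rle_or_lt z x0). apply (Hu3 z); lra. apply (Hw3 z); lra. }
  destruct (germ_H12 b1 Hfb1 Hhb) as [e [He Hge]].
  assert (Hsp := spread b1 d1 e Hbd Hfb1 Hhb Hne He Hge).
  assert (Hcomm : forall y, b1 < y < d1 -> h (f y) = f (h y)).
  { intros y Hy. assert (Hfy : b1 < f (f y) < d1).
    { pose proof (fmono _ _ (fmono b1 y ltac:(lra))) as K1.
      pose proof (fmono _ _ (fmono y d1 ltac:(lra))) as K2.
      rewrite !Hfb1 in K1. rewrite !Hfd1 in K2. lra. }
    specialize (Hsp _ Hfy). unfold Hk in Hsp. simpl in Hsp.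
    rewrite !(proj1 Hfi) in Hsp. apply (f_equal fi) in Hsp. rewrite !(proj1 Hfi) in Hsp. auto. }
  set (S0 := fun z => b1 < z < d1).
  assert (HSh : forall z, S0 z -> S0 (h z)).
  { unfold S0. intros z Hz. split. rewrite <- Hhb. apply hmono; lra. rewrite <- Hhd. apply hmono; lra. }
  assert (HShi : forall z, S0 z -> S0 (hi z)).
  { unfold S0. intros z Hz.
    assert (hib : hi b1 = b1) by (rewrite <- Hhb at 1; apply (proj1 Hhi)).
    assert (hid : hi d1 = d1) by (rewrite <- Hhd at 1; apply (proj1 Hhi)).
    pose proof (himono b1 z ltac:(lra)). pose proof (himono z d1 ltac:(lra)). lra. }
  destruct (Rle_lt_or_eq_dec _ _ Hb1) as [Hlt|Heq].
  -
    assert (E : h a = a).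
    { apply (P_gen h hi f S0 a (proj1 Hhi) (proj2 Hhi) hmono HSh HShi).
      - intros z Hz. symmetry. apply Hcomm; auto.
      - apply pl_tame; auto.
      - unfold S0; lra.
      - apply fa.
      - left. exists (c - a). split. lra. intros z Hz. split. unfold S0; lra.
        pose proof (fup z ltac:(lra)). lra. }
    apply (Hmov a). lra. auto.
  -
    assert (Hdc : c < d1).
    { destruct (Rle_lt_or_eq_dec _ _ Hd1c) as [|E]; auto. exfalso. apply Hnot.
      rewrite <- Heq, E. apply (Horb 1%nat). lia. }
    assert (E : h c = c).
    { apply (P_gen h hi f S0 c (proj1 Hhi) (proj2 Hhi) hmono HSh HShi).
      - intros z Hz. symmetry. apply Hcomm; auto.
      - apply pl_tame; auto.
      - unfold S0; lra.
      - apply fc.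
      - right. exists (c - a). split. lra. intros z Hz. split. unfold S0; lra.
        pose proof (fup z ltac:(lra)). lra. }
    apply (Hmov c). lra. auto.
Qed.

Lemma aff_sub F u v u' v' : affine_on F u v -> u <= u' -> v' <= v -> affine_on F u' v'.
Proof. intros [m [q H]] H1 H2. exists m, q. intros x Hx. apply H. lra. Qed.

Lemma bn_facts : a < b n /\ b n < d n /\ h (b n) = b n /\ h (d n) = d n /\
  (forall x, b n < x < d n -> h x <> x) /\ b n < c /\ a < d n.
Proof.
  pose proof partI. destruct (b_mono n ltac:(lia)) as [H1 _].
  destruct (orbF n ltac:(lia)) as [A1 [A2 [A3 [A4 [A5 A6]]]]]. repeat split; auto; lra.
Qed.

Lemma F1bn : forall N, (1 <= N)%nat -> h (fN N (b n)) = fN (S N) (b n).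
Proof.
  destruct bn_facts as [A0 [A1 [A2 [A3 [A4 [A5 A6]]]]]].
  apply F1; auto. left. exists (d n - b n). split. lra. intros z Hz. split; auto. apply A4. lra.
Qed.

Lemma partIII : d n = c.
Proof.
  destruct bn_facts as [A0 [A1 [A2 [A3 [A4 [A5 A6]]]]]].
  pose proof ac as Hac.
  destruct (Rtotal_order (d n) c) as [Hlt|[Heq|Hgt]]; auto; exfalso.
  - assert (hfix : forall x, d n <= x < c -> h x = x).
    { intros x Hx. destruct (Req_dec (h x) x); auto. exfalso.
      destruct (in_orb x ltac:(lra) H) as [i [Hi Hbi]].
      destruct (b_mono i Hi). lra. }
    assert (Hdn : d n < f (d n)) by (apply fup; lra).
    assert (Hfb : f (b n) < f (d n)) by (apply fmono; lra).
    assert (Hfd : f (d n) < c) by (apply fA; lra).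
    set (x := (Rmax (d n) (f (b n)) + f (d n)) / 2).
    assert (Hm1 : d n <= Rmax (d n) (f (b n))) by apply Rmax_l.
    assert (Hm2 : f (b n) <= Rmax (d n) (f (b n))) by apply Rmax_r.
    assert (Hm3 : Rmax (d n) (f (b n)) < f (d n)) by (apply Rmax_lub_lt; lra).
    assert (Hx1 : f (b n) < x < f (d n)) by (unfold x; lra).
    assert (Hx2 : d n <= x) by (unfold x; lra).
    assert (Hfix : b n < fi x < d n).
    { split. rewrite <- (proj1 Hfi (b n)). apply fimono; lra.
      rewrite <- (proj1 Hfi (d n)). apply fimono; lra. }
    assert (HH1 : Hk f h fi 1 x <> x).
    { unfold Hk; simpl. intros E. apply (A4 (fi x)); auto.
      apply (f_equal fi) in E. rewrite (proj1 Hfi) in E. auto. }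
    assert (Hfx : x < f x < c) by (split; [apply fup; lra|apply fA; lra]).
    assert (hfx : h (f x) = f x) by (apply hfix; lra).
    assert (hifx : hi (f x) = f x) by (rewrite <- hfx at 1; apply (proj1 Hhi)).
    pose proof (HC 1%nat ltac:(lia) x) as E. rewrite hifx in E.
    unfold Hk at 2 in E. simpl in E. rewrite (proj1 Hfi) in E. rewrite (hfix x) in E by lra.
    rewrite <- hifx in E. apply (f_equal h) in E. rewrite !(proj2 Hhi) in E.
    apply (f_equal fi) in E. rewrite !(proj1 Hfi) in E. auto.
  - assert (Hhc : h c <> c) by (apply A4; lra).
    assert (Hbn : a < b n < c) by lra.
    destruct (Rtotal_order (h c) c) as [Hl|[He|Hl]]; [|contradiction|].
    + destruct (T2 (b n) (h c) Hbn Hl) as [M HM].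
      pose proof (fN_le_idx M (S (S M)) (b n) Hbn ltac:(lia)).
      pose proof (F1bn (S M) ltac:(lia)).
      assert (c < fN (S M) (b n)). { apply (lt_rev h hmono). lra. }
      pose proof (fNA (S M) (b n) Hbn). lra.
    + assert (Hhic : hi c < c). { pose proof (himono c (h c) Hl). rewrite (proj1 Hhi) in H. auto. }
      destruct (T2 (b n) (hi c) Hbn Hhic) as [M HM].
      pose proof (fN_le_idx M (S M) (b n) Hbn ltac:(lia)).
      pose proof (F1bn (S M) ltac:(lia)).
      assert (c < h (fN (S M) (b n))). { rewrite <- (proj2 Hhi c). apply hmono. lra. }
      pose proof (fNA (S (S M)) (b n) Hbn). lra.
Qed.

Lemma partII : exists p, p < c /\ agree_on f h p c.
Proof.
  destruct bn_facts as [A0 [A1 [A2 [A3 [A4 [A5 A6]]]]]]. pose proof partIII as E3.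
  rewrite E3 in A3.
  destruct (pl_lg f Hf c) as [e1 [He1 Af]]. destruct (pl_lg h Hh c) as [e2 [He2 Ah]].
  set (e := Rmin e1 e2). assert (e <= e1) by apply Rmin_l. assert (e <= e2) by apply Rmin_r.
  assert (He : 0 < e) by (apply Rmin_glb_lt; auto).
  assert (Hbn : a < b n < c) by lra.
  destruct (T2 (b n) (c - e) Hbn ltac:(lra)) as [M HM].
  pose proof (fN_le_idx M (S M) (b n) Hbn ltac:(lia)).
  pose proof (F1bn (S M) ltac:(lia)) as KF. pose proof (fNA (S M) (b n) Hbn).
  exists (c - e). split. lra. intros x Hx.
  apply (aff_agree f h (c - e) c (fN (S M) (b n)) c).
  - apply (aff_sub f (c - e1) c); auto; lra.
  - apply (aff_sub h (c - e2) c); auto; lra.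
  - lra.
  - lra.
  - rewrite KF. reflexivity.
  - rewrite fc. auto.
  - auto.
Qed.

Lemma partIV : forall p, agree_on f h p c -> (forall q, agree_on f h q c -> p <= q) -> p <= f (b n).
Proof.
  intros p Hp Hmin. destruct bn_facts as [A0 [A1 [A2 [A3 [A4 [A5 A6]]]]]]. pose proof partIII as E3.
  destruct (Rle_or_lt p (f (b n))) as [|Hgt]; auto. exfalso.
  destruct partII as [p0 [Hp0 Hag0]]. pose proof (Hmin p0 Hag0).
  assert (Hbn : a < b n < c) by lra.
  assert (Hfbn : b n < f (b n)) by (apply fup; auto).
  assert (HpA : a < p < c) by lra.
  assert (Hfp : f p = h p) by (apply Hp; lra).
  destruct (pl_lg f Hf p) as [e1 [He1 Af]]. destruct (pl_lg h Hh p) as [e2 [He2 Ah]].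
  set (e := Rmin e1 e2). assert (e <= e1) by apply Rmin_l. assert (e <= e2) by apply Rmin_r.
  assert (He : 0 < e) by (apply Rmin_glb_lt; auto).
  assert (Hne : forall z, p - e < z < p -> f z <> h z).
  { intros z Hz Ez. assert (agree_on f h z c).
    { intros x Hx. destruct (Rle_or_lt x p).
      - apply (aff_agree f h (p - e) p z p); auto; try lra.
        apply (aff_sub f (p - e1) p); auto; lra.
        apply (aff_sub h (p - e2) p); auto; lra.
      - apply Hp. lra. }
    pose proof (Hmin z H2). lra. }
  assert (E := F2 p Hfp ltac:(right; exists e; split; [lra|intros z Hz; split; auto; intros E; apply g_fix in E; apply (Hne z); auto]) 1%nat ltac:(lia)).
  simpl in E. apply (A4 (fi p)); auto. split.
  - rewrite <- (proj1 Hfi (b n)). apply fimono; lra.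
  - pose proof (fidown p HpA). lra.
Qed.

Lemma partV : b n < f (b 1%nat).
Proof.
  destruct bn_facts as [A0 [A1 [A2 [A3 [A4 [A5 A6]]]]]]. pose proof partI as HI.
  destruct (orbF 1 ltac:(lia)) as [B1 [B2 [B3 [B4 [B5 B6]]]]].
  destruct (Rlt_or_le (b n) (f (b 1%nat))) as [|Hle]; auto. exfalso.
  assert (HF := F1 (b 1%nat) B2 ltac:(left; exists (d 1%nat - b 1%nat); split; [lra|intros z Hz; split; auto; apply B4; lra])).
  assert (Hall' : forall N, fN (S N) (b 1%nat) <= b n).
  { induction N. simpl. auto. rewrite <- HF by lia. rewrite <- A2. apply (le_of_lt h hmono). auto. }
  assert (Hb1 : a < b 1%nat < c) by lra.
  destruct (T2 (b 1%nat) (b n) Hb1 A5) as [M HM].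
  pose proof (fN_le_idx M (S M) (b 1%nat) Hb1 ltac:(lia)). pose proof (Hall' M). lra.
Qed.

End Main.


Lemma comm_pt (A B A' B' : R -> R) : isinv A A' -> isinv B B' -> comm A B = idf ->
  forall t, B (A t) = A (B t).
Proof.
  intros HA HB E t. assert (IA := inv_ok A (ex_intro _ A' HA)). assert (IB := inv_ok B (ex_intro _ B' HB)).
  pose proof (f_equal (fun F => F t) E) as E1. unfold comm, rmul, idf in E1. simpl in E1.
  apply (f_equal B) in E1. rewrite (proj2 IB) in E1. apply (f_equal A) in E1. rewrite (proj2 IA) in E1.
  auto.
Qed.

Ltac simp_inv := repeat (match goal with
  | H : isinv ?F ?G |- _ => first [rewrite (proj1 H) | rewrite (proj2 H)]
  end); auto.

Theorem lemma2p5 (f0 f1 : R -> R) (a c : R) (n : nat) (b d : nat -> R) :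
  PL0 f0 -> PL0 f1 ->
  comm (conjg f1 f0) (rmul f0 (inv f1)) = idf ->
  comm (rmul f0 (inv f1)) (conjg f1 (rmul f0 f0)) = idf ->
  up_bump f0 a c ->
  ~ orbital f1 a c ->
  (1 <= n)%nat ->
  (forall i, (1 <= i <= n)%nat ->
     orbital f1 (b i) (d i) /\ b i < c /\ a < d i) ->
  (forall i, (1 <= i < n)%nat -> d i <= b (S i)) ->
  (forall x y, orbital f1 x y -> x < c -> a < y ->
     exists i, (1 <= i <= n)%nat /\ x = b i /\ y = d i) ->
  a < b 1%nat /\
  (exists p, p < c /\ agree_on f0 f1 p c) /\
  d n = c /\
  (forall p, agree_on f0 f1 p c ->
               (forall q, agree_on f0 f1 q c -> p <= q) ->
               p <= f0 (b n)) /\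
  b n < f0 (b 1%nat).
Proof.
  intros Hf Hh Hc1 Hc2 Hup Hnot Hn Horb Hord Hall.
  assert (Hfi : isinv f0 (inv f0)) by apply (pl_inv f0 Hf).
  assert (Hhi : isinv f1 (inv f1)) by apply (pl_inv f1 Hh).
  assert (HG : forall t, inv (rmul f0 f0) t = (inv f0) ((inv f0) t)).
  { intros t. assert (I := inv_ok (rmul f0 f0)).
    destruct I as [_ I2].
    { exists (fun t => (inv f0) ((inv f0) t)). unfold rmul. split; intros x.
      rewrite !(proj1 Hfi); auto. rewrite !(proj2 Hfi); auto. }
    specialize (I2 t). unfold rmul in I2. rewrite <- I2 at 2. rewrite !(proj1 Hfi). auto. }
  assert (HG' : forall t, inv (fun x => f0 (f0 x)) t = (inv f0) ((inv f0) t)) by exact HG.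
  assert (R1 : forall t, (inv f1) (f0 (Hk f0 f1 (inv f0) 1 t)) = Hk f0 f1 (inv f0) 1 ((inv f1) (f0 t))).
  { intros t. unfold Hk; simpl.
    apply (comm_pt (conjg f1 f0) (rmul f0 (inv f1)) (fun t => f0 ((inv f1) ((inv f0) t))) (fun t => (inv f0) (f1 t))); auto.
    - unfold conjg, rmul.  split; intros x; cbv beta; simp_inv.
    - unfold rmul.  split; intros x; simp_inv. }
  assert (R2 : forall t, Hk f0 f1 (inv f0) 2 ((inv f1) (f0 t)) = (inv f1) (f0 (Hk f0 f1 (inv f0) 2 t))).
  { intros t. unfold Hk; simpl.
    assert (EC : conjg f1 (rmul f0 f0) = fun t => f0 (f0 (f1 (inv f0 (inv f0 t))))).
    { apply functional_extensionality. intros u.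
      change (conjg f1 (rmul f0 f0) u) with (rmul f0 f0 (f1 (inv (rmul f0 f0) u))).
      rewrite HG. reflexivity. }
    rewrite EC in Hc2.
    pose proof (comm_pt (rmul f0 (inv f1)) (fun t => f0 (f0 (f1 (inv f0 (inv f0 t))))) (fun t => (inv f0) (f1 t))
      (fun t => f0 (f0 ((inv f1) ((inv f0) ((inv f0) t)))))) as K.
    unfold rmul in K.
    apply K; auto.
    - split; intros x; simp_inv.
    - split; intros x; rewrite ?HG'; simp_inv. }
  assert (HC := C_all f0 f1 (inv f0) (inv f1) Hfi Hhi R1 R2).
  pose proof (partI f0 f1 (inv f0) (inv f1) a c n b d Hf Hh Hfi Hhi HC Hup Hnot Hn Horb) as I1.
  pose proof (partII f0 f1 (inv f0) (inv f1) a c n b d Hf Hh Hfi Hhi HC Hup Hnot Hn Horb Hord Hall) as I2.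
  pose proof (partIII f0 f1 (inv f0) (inv f1) a c n b d Hf Hh Hfi Hhi HC Hup Hnot Hn Horb Hord Hall) as I3.
  pose proof (partIV f0 f1 (inv f0) (inv f1) a c n b d Hf Hh Hfi Hhi HC Hup Hnot Hn Horb Hord Hall) as I4.
  pose proof (partV f0 f1 (inv f0) (inv f1) a c n b d Hf Hh Hfi Hhi HC Hup Hnot Hn Horb Hord) as I5.
  auto.
Qed.
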